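(* Let $G=(V,E)$ be a finite undirected graph with $V \subset \mathbb{N}$, and let $\mathbf{p}=(p_e)_{e\in E}$ be any collection of probabilities $p_e \in [0,1]$. Let $\vec G(\mathbf{p})$ be the random orientation of $G$ in which each edge $e=\{x,y\}\in E$ with $x<y$ is oriented from $x$ to $y$ with probability $p_e$ and from $y$ to $x$ otherwise, independently over edges, and let $\mathbb{P}_{G,\mathbf{p}}$ denote the corresponding probability measure. For vertices $x,y$, write $x\rightarrow y$ for the event that $\vec G(\mathbf{p})$ contains a directed path from $x$ to $y$. Then for any three vertices $s,a,b\in V$, \[\mathbb{P}_{G,\mathbf{p}}(s\rightarrow a \cap s\rightarrow b) \ge \mathbb{P}_{G,\mathbf{p}}(s\rightarrow a)\, \mathbb{P}_{G,\mathbf{p}}(s\rightarrow b).\]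
   Context: A directed path from $x$ to $x$ is taken to exist trivially (the path of length zero), so $x\rightarrow x$ always holds. *)

(* Defs.v *)
From HB Require Import structures.
From mathcomp Require Import all_boot all_order all_algebra.
From mathcomp Require Import finmap.
Set Implicit Arguments. Unset Strict Implicit. Unset Printing Implicit Defensive.
Import Order.TTheory GRing.Theory Num.Theory.
Local Open Scope fset_scope.
Local Open Scope ring_scope.

(* A finite undirected graph G = (V,E) with V ⊂ ℕ: V is a finite set of
   naturals; each edge {x,y} with x<y is stored as the ordered pair (x,y). *)
Definition is_graph (V : {fset nat}) (E : {fset nat * nat}) : Prop :=
  forall e, e \in E -> [/\ (e.1 < e.2)%N, e.1 \in V & e.2 \in V].

(* An orientation: omega e = true means e = (x,y) (x<y) is oriented x -> y. *)
Definition orientation (E : {fset nat * nat}) := {ffun E -> bool}.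

Definition darc (V : {fset nat}) (E : {fset nat * nat}) (omega : orientation E)
  : rel V := fun x y =>
  [exists e : E, ((val e == (val x, val y)) && omega e)
              || ((val e == (val y, val x)) && ~~ omega e)].

Definition reach (V : {fset nat}) (E : {fset nat * nat}) (omega : orientation E)
  (x y : V) : bool := connect (darc omega) x y.

Definition weight (R : nzRingType) (E : {fset nat * nat}) (p : E -> R)
  (omega : orientation E) : R :=
  \prod_(e : E) (if omega e then p e else 1 - p e).

Definition Prob (R : nzRingType) (E : {fset nat * nat}) (p : E -> R)
  (A : pred (orientation E)) : R :=
  \sum_(omega : orientation E | A omega) weight p omega.

(* Main.v *)
Require Import Defs.
From HB Require Import structures.
From mathcomp Require Import all_boot all_order all_algebra.
From mathcomp Require Import finmap.
From mathcomp Require Import ring.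
Import Order.TTheory GRing.Theory Num.Theory.
Local Open Scope fset_scope.
Local Open Scope ring_scope.

Section Proof.
Set Implicit Arguments. Unset Strict Implicit.
Variable R : realFieldType.
Variables (V : {fset nat}) (E : {fset nat * nat}).
Implicit Types (p : E -> R) (w : orientation E).

Definition compat p w := forall e, (p e = 1 -> w e) /\ (p e = 0 -> ~~ w e).

Lemma weight_compat p w : weight p w != 0 -> compat p w.
Proof.
move=> hw e; split => he.
  case hwe: (w e) => //; move: hw; rewrite /weight (bigD1 e) //= hwe he subrr mul0r eqxx //.
case hwe: (w e) => //; move: hw; rewrite /weight (bigD1 e) //= hwe he mul0r eqxx //.
Qed.

Definition sarc p : rel V := fun x y =>
  [exists e : E, ((val e == (val x, val y)) && (p e == 1))
              || ((val e == (val y, val x)) && (p e == 0))].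

Lemma sarc_darc p w : compat p w -> subrel (sarc p) (darc w).
Proof.
move=> hc x y /existsP [e /orP [/andP [h1 /eqP h2] | /andP [h1 /eqP h2]]];
  apply/existsP; exists e.
  by rewrite h1 (proj1 (hc e) h2).
by rewrite h1 (proj2 (hc e) h2) orbT.
Qed.

Lemma connect_closed_sub (T : finType) (r : rel T) (C : pred T) x :
  C x -> (forall u v, C u -> r u v -> C v) -> forall y, connect r x y -> C y.
Proof.
move=> Cx hC y /connectP [q hq ->]; elim: q x Cx hq => //= z q IH x Cx /andP [hxz hq].
exact: IH (hC _ _ Cx hxz) hq.
Qed.

Lemma K_sub p w (s v : V) : compat p w -> connect (sarc p) s v -> reach w s v.
Proof.
move=> hc; apply: connect_sub => x y h; apply: connect1; exact: sarc_darc hc _ _ h.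
Qed.

Definition flip (e : E) w : orientation E :=
  [ffun e' => if e' == e then ~~ w e' else w e'].

Lemma flipK e : involutive (flip e).
Proof. move=> w; apply/ffunP => e'; rewrite !ffunE; case: (e' == e) => //; by rewrite negbK. Qed.

Lemma mono p w e (s u : V) : compat p w -> connect (sarc p) s u ->
  ((val u == (val e).1) && w e) || ((val u == (val e).2) && ~~ w e) ->
  forall v, reach (flip e w) s v -> reach w s v.
Proof.
move=> hc hu hdir v; apply: (@connect_closed_sub _ _ (fun v => reach w s v)).
- exact: connect0.
- move=> x y hx /existsP [e' he'].
  case: (eqVneq e' e) => [ee | ne].
  + subst e'. have -> : y = u.
      apply: val_inj; move: he' hdir; rewrite ffunE eqxx /=.
      case: (w e) => /=; rewrite ?andbT ?andbF ?orbF ?orFb /=.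
        by move=> /eqP -> /eqP ->.
      by move=> /eqP -> /eqP ->.
    exact: K_sub hc hu.
  + apply: connect_trans hx (connect1 _); apply/existsP; exists e'.
    by rewrite ffunE (negbTE ne) in he'.
Qed.

Lemma ProbE p P : Prob p P = \sum_w (P w)%:R * weight p w.
Proof.
rewrite /Prob big_mkcond; apply: eq_bigr => w _; by case: (P w); rewrite ?mul1r ?mul0r.
Qed.

Definition upd p (e : E) (c : R) : E -> R := fun e' => if e' == e then c else p e'.

Lemma weightD1 (q : E -> R) e w : weight q w = (if w e then q e else 1 - q e) *
  \prod_(e' | e' != e) (if w e' then q e' else 1 - q e').
Proof. by rewrite /weight (bigD1 e). Qed.

Lemma weight_split p e w :
  weight p w = p e * weight (upd p e 1) w + (1 - p e) * weight (upd p e 0) w.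
Proof.
rewrite !(weightD1 _ e).
have H c : \prod_(e' | e' != e) (if w e' then upd p e c e' else 1 - upd p e c e')
   = \prod_(e' | e' != e) (if w e' then p e' else 1 - p e').
  by apply: eq_bigr => e' /negbTE ne; rewrite /upd ne.
rewrite !H /upd eqxx; case: (w e) => /=; ring.
Qed.

Lemma Prob_split p e P :
  Prob p P = p e * Prob (upd p e 1) P + (1 - p e) * Prob (upd p e 0) P.
Proof.
rewrite /Prob !mulr_sumr -big_split; apply: eq_bigr => w _; exact: weight_split.
Qed.

Lemma weight_flip p e w : weight (upd p e 0) (flip e w) = weight (upd p e 1) w.
Proof.
rewrite /weight; apply: eq_bigr => e' _; rewrite /upd ffunE.
case: eqP => [->|_] //; case: (w e) => /=; by rewrite ?subr0 ?subrr.
Qed.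

Lemma Prob_diff p e P :
  Prob (upd p e 1) P - Prob (upd p e 0) P =
  \sum_w weight (upd p e 1) w * ((P w)%:R - (P (flip e w))%:R).
Proof.
rewrite !ProbE [X in _ - X](reindex_inj (inv_inj (flipK e))) -sumrB.
apply: eq_bigr => w _; rewrite weight_flip; ring.
Qed.

Lemma weight_ge0 p w : (forall e, 0 <= p e <= 1) -> 0 <= weight p w.
Proof.
move=> hp; apply: prodr_ge0 => e _; case/andP: (hp e) => h0 h1.
by case: ifP => _ //; rewrite subr_ge0.
Qed.

Definition rnd p e := (p e != 0) && (p e != 1).

Lemma upd_bounds p e c : (forall e, 0 <= p e <= 1) -> (c == 0) || (c == 1) ->
  forall e', 0 <= upd p e c e' <= 1.
Proof.
move=> hp hc e'; rewrite /upd; case: eqP => _ //.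
by case/orP: hc => /eqP ->; rewrite ?lexx ?ler01.
Qed.

Lemma compat_upd p e c w : rnd p e -> compat (upd p e c) w -> compat p w.
Proof.
move=> /andP [h0 h1] hc e'; case: (eqVneq e' e) => [->|ne].
  by split => /eqP h; [move: h1 | move: h0]; rewrite h.
by have := hc e'; rewrite /upd (negbTE ne).
Qed.

Lemma compat_flip p e w : rnd p e -> compat p w -> compat p (flip e w).
Proof.
move=> /andP [h0 h1] hc e'; rewrite ffunE; case: (eqVneq e' e) => [->|ne].
  by split => /eqP h; [move: h1 | move: h0]; rewrite h.
exact: hc.
Qed.

Lemma card_upd p e c : rnd p e -> (c == 0) || (c == 1) ->
  (#|[pred e' | rnd (upd p e c) e']| < #|[pred e' | rnd p e']|)%N.
Proof.
move=> re hc; apply: proper_card; apply/properP; split.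
  apply/subsetP => e'; rewrite !inE /rnd /upd; case: (eqVneq e' e) => [->|ne].
    by case/orP: hc => /eqP ->; rewrite ?eqxx ?andbF.
  by [].
exists e; rewrite !inE //= /rnd /upd eqxx.
by case/orP: hc => /eqP ->; rewrite ?eqxx ?andbF.
Qed.

Lemma compat1 p e w : rnd p e -> weight (upd p e 1) w != 0 -> compat p w /\ w e.
Proof.
move=> re /weight_compat hc; split; first exact: compat_upd re hc.
by apply: (proj1 (hc e)); rewrite /upd eqxx.
Qed.

Section Src.
Variable s : V.

Lemma sign_pos p e (u v : V) : (forall e, 0 <= p e <= 1) -> rnd p e ->
  connect (sarc p) s u -> val u == (val e).1 ->
  0 <= Prob (upd p e 1) (fun w => reach w s v) - Prob (upd p e 0) (fun w => reach w s v).
Proof.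
move=> hp re Ku hu; rewrite Prob_diff; apply: sumr_ge0 => w _.
case: (eqVneq (weight (upd p e 1) w) 0) => [->|nz]; first by rewrite mul0r.
apply: mulr_ge0; first by apply: weight_ge0; apply: upd_bounds; rewrite ?eqxx ?orbT.
have [hc we] := compat1 re nz.
have hm := mono hc Ku (introT orP (or_introl (introT andP (conj hu we)))) (v := v).
rewrite subr_ge0 ler_nat; case: (reach (flip e w) s v) hm => [h|h] //.
by rewrite (h isT).
Qed.

Lemma sign_neg p e (u v : V) : (forall e, 0 <= p e <= 1) -> rnd p e ->
  connect (sarc p) s u -> val u == (val e).2 ->
  Prob (upd p e 1) (fun w => reach w s v) - Prob (upd p e 0) (fun w => reach w s v) <= 0.
Proof.
move=> hp re Ku hu; rewrite Prob_diff; apply: sumr_le0 => w _.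
case: (eqVneq (weight (upd p e 1) w) 0) => [->|nz]; first by rewrite mul0r.
apply: mulr_ge0_le0; first by apply: weight_ge0; apply: upd_bounds; rewrite ?eqxx ?orbT.
have [hc we] := compat1 re nz.
have hc' := compat_flip re hc.
have hd : ((val u == (val e).1) && flip e w e) || ((val u == (val e).2) && ~~ flip e w e).
  by rewrite ffunE eqxx negbK we hu orbT.
have hm := mono hc' Ku hd (v := v); rewrite flipK in hm.
rewrite subr_le0 ler_nat; case: (reach w s v) hm => [h|h] //.
by rewrite (h isT).
Qed.

Lemma reach_K p w : (forall e (u : V), rnd p e -> connect (sarc p) s u ->
     (val u != (val e).1) && (val u != (val e).2)) ->
  compat p w -> forall v, reach w s v = connect (sarc p) s v.
Proof.
move=> hno hc v; apply/idP/idP; last exact: K_sub hc.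
apply: (connect_closed_sub (C := fun v => connect (sarc p) s v)); first exact: connect0.
move=> x y Kx /existsP [e' he'].
have nr : ~~ rnd p e'.
  apply/negP => r; move: (hno _ _ r Kx).
  by case/orP: he' => /andP [/eqP -> _] /=; rewrite eqxx ?andbF.
apply: connect_trans Kx (connect1 _); apply/existsP; exists e'.
move: nr; rewrite /rnd negb_and !negbK.
case/orP: he' => /andP [-> hw] /=.
  case/orP => /eqP h; first by move: (proj2 (hc e') h); rewrite hw.
  by rewrite h eqxx.
case/orP => /eqP h; last by move: (proj1 (hc e') h); rewrite (negbTE hw).
by rewrite h eqxx orbT.
Qed.

Lemma total1 p : \sum_w weight p w = 1.
Proof.
rewrite /weight -(bigA_distr_bigA (fun e (b : bool) => if b then p e else 1 - p e)).
by rewrite big1 // => e _; rewrite big_bool /= addrC subrK.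
Qed.

Lemma Prob_const p P (c : bool) : (forall w, weight p w != 0 -> P w = c) ->
  Prob p P = c%:R.
Proof.
move=> hP; rewrite ProbE (eq_bigr (fun w => c%:R * weight p w)).
  by rewrite -mulr_sumr total1 mulr1.
move=> w _; case: (eqVneq (weight p w) 0) => [->|/hP ->]; by rewrite ?mulr0.
Qed.

Variables a b : V.

Definition ineq p := Prob p (fun w => reach w s a && reach w s b) >=
  Prob p (fun w => reach w s a) * Prob p (fun w => reach w s b).

Lemma step p : (forall e, 0 <= p e <= 1) ->
  (forall p', (forall e, 0 <= p' e <= 1) ->
     (#|[pred e | rnd p' e]| < #|[pred e | rnd p e]|)%N -> ineq p') -> ineq p.
Proof.
move=> hp IH.
case: (boolP [exists e : E, rnd p e && [exists u : V, connect (sarc p) s u &&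
           ((val u == (val e).1) || (val u == (val e).2))]]).
- case/existsP => e /andP [re /existsP [u /andP [Ku hu]]].
  have c1 : ((1 : R) == 0) || ((1 : R) == 1) by rewrite eqxx orbT.
  have c0 : ((0 : R) == 0) || ((0 : R) == 1) by rewrite eqxx.
  have IH1 := IH _ (upd_bounds e hp c1) (card_upd re c1).
  have IH0 := IH _ (upd_bounds e hp c0) (card_upd re c0).
  move: IH1 IH0; rewrite /ineq !(Prob_split p e).
  set X1 := Prob (upd p e 1) (fun w => reach w s a).
  set X0 := Prob (upd p e 0) (fun w => reach w s a).
  set Y1 := Prob (upd p e 1) (fun w => reach w s b).
  set Y0 := Prob (upd p e 0) (fun w => reach w s b).
  set Z1 := Prob (upd p e 1) (fun w => reach w s a && reach w s b).
  set Z0 := Prob (upd p e 0) (fun w => reach w s a && reach w s b).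
  move=> h1 h0.
  have hsg : 0 <= (X1 - X0) * (Y1 - Y0).
    case/orP: hu => hu.
      by apply: mulr_ge0; apply: sign_pos hu.
    by apply: mulr_le0; apply: sign_neg hu.
  case/andP: (hp e) => q0 q1.
  rewrite -subr_ge0.
  have -> : p e * Z1 + (1 - p e) * Z0 - (p e * X1 + (1 - p e) * X0) * (p e * Y1 + (1 - p e) * Y0)
    = p e * (Z1 - X1 * Y1) + (1 - p e) * (Z0 - X0 * Y0) + (p e * (1 - p e)) * ((X1 - X0) * (Y1 - Y0)).
    ring.
  rewrite -subr_ge0 in h1; rewrite -subr_ge0 in h0; rewrite -subr_ge0 in q1.
  apply: addr_ge0; first by apply: addr_ge0; apply: mulr_ge0.
  by apply: mulr_ge0 => //; apply: mulr_ge0.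
- move/existsPn => hno.
  have hno' : forall e (u : V), rnd p e -> connect (sarc p) s u ->
     (val u != (val e).1) && (val u != (val e).2).
    move=> e u re Ku; have := hno e; rewrite re /=; move/existsPn/(_ u).
    by rewrite Ku /= negb_or.
  have hv v : Prob p (fun w => reach w s v) = (connect (sarc p) s v)%:R.
    by apply: Prob_const => w /weight_compat hc; apply: reach_K hno' hc v.
  have hab : Prob p (fun w => reach w s a && reach w s b) =
     (connect (sarc p) s a && connect (sarc p) s b)%:R.
    by apply: Prob_const => w /weight_compat hc; rewrite !(reach_K hno' hc).
  rewrite /ineq hab !hv -natrM ler_nat.
  by case: (connect (sarc p) s a); case: (connect (sarc p) s b).
Qed.

Lemma main n p : (forall e, 0 <= p e <= 1) ->
  (#|[pred e | rnd p e]| < n)%N -> ineq p.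
Proof.
elim: n p => [//|n IH] p hp hn; apply: step hp _ => p' hp' hlt.
by apply: IH hp' _; exact: leq_trans hlt hn.
Qed.

End Src.
End Proof.

Theorem theorem1 (R : realFieldType) (V : {fset nat}) (E : {fset nat * nat})
  (hG : is_graph V E) (p : E -> R) (hp : forall e, 0 <= p e <= 1)
  (s a b : V) :
  Prob p (fun omega => reach omega s a && reach omega s b) >=
  Prob p (fun omega => reach omega s a) * Prob p (fun omega => reach omega s b).
Proof.
exact: (main s a b (n := (#|[pred e | rnd p e]|).+1) hp (ltnSn _)).
Qed.
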